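(* Let $T\le T'$ be positive integers, $f:\mathbb{R}^{T'}\to\mathbb{R}$ differentiable with $\mathrm{prog}(\nabla f(x))\le\mathrm{prog}(x)+1$ for all $x$, $0<\tau_1\le\dots\le\tau_n$, $p\in(0,1]$, $\mathcal{D}_i=\mathrm{Bernoulli}(p)$ and $O_i=O^G_{\tau_i}$ for all $i\in[n]$, where $$[G(x;\xi)]_j=\nabla_jf(x)\Big(1+\mathbb{1}[j>\mathrm{prog}(x)]\Big(\frac\xi p-1\Big)\Big),\quad x\in\mathbb{R}^{T'},\ \xi\in\{0,1\},\ j\in[T'],$$ and let $A$ be a zero-respecting algorithm run in the time multiple oracles protocol on $\mathbb{R}^{T'}$. Then for every $\delta\in(0,1]$ and every $t\ge0$ with $$t\le\frac1{24}\min_{m\in[n]}\left[\Big(\sum_{i=1}^m\frac1{\tau_i}\Big)^{-1}\Big(\frac1p+m\Big)\right]\Big(\frac T2+\log\delta\Big),$$ with probability at least $1-\delta$ we have $\mathrm{prog}(x^k)<T$ for all $k\in S_t$.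
   Context: $\mathrm{prog}(x)=\max\{i\ge0: x_i\ne0\}$ with the convention $x_0\equiv1$ (so $\mathrm{prog}(0)=0$). Time multiple oracles protocol. There are $n$ oracles $O_1,\dots,O_n$ with distributions $\mathcal{D}_1,\dots,\mathcal{D}_n$ on a sample space $\mathbb{S}_\xi$. An algorithm is a sequence $A=\{A^k\}_{k\ge0}$ with $A^0\in\mathbb{R}_{\ge0}\times[n]\times\mathbb{R}^d$ and $A^k:(\mathbb{R}^d)^k\to\mathbb{R}_{\ge0}\times[n]\times\mathbb{R}^d$ for $k\ge1$, such that for all $k\ge1$ and all $g^1,\dots,g^k$ the first (time) component of $A^k(g^1,\dots,g^k)$ is at least the first component of $A^{k-1}(g^1,\dots,g^{k-1})$. Each oracle $i$ has a state in $\mathbb{R}_{\ge0}\times\mathbb{R}^d\times\{0,1\}$, initially $s_i^0=(0,0,0)$. Set $t^0=0$. For $k=0,1,2,\dots$: $(t^{k+1},i^{k+1},x^k)=A^k(g^1,\dots,g^k)$ ($=A^0$ for $k=0$); draw $\xi^{k+1}\sim\mathcal{D}_{i^{k+1}}$ independently of everything before; $(s^{k+1}_{i^{k+1}},g^{k+1})=O_{i^{k+1}}(t^{k+1},x^k,s^k_{i^{k+1}},\xi^{k+1})$, and $s^{k+1}_j=s^k_j$ for $j\ne i^{k+1}$. For $t\ge0$, $S_t=\{k\in\mathbb{N}_0: t^k\le t\}$. Delayed oracle. For $\tau>0$ and a mapping $G:\mathbb{R}^d\times\mathbb{S}_\xi\to\mathbb{R}^d$, the oracle $O^G_\tau(t,x,(s_t,s_x,s_q),\xi)$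 returns $((t,x,1),0)$ if $s_q=0$; $((s_t,s_x,1),0)$ if $s_q=1$ and $t<s_t+\tau$; $((0,0,0),G(s_x;\xi))$ if $s_q=1$ and $t\ge s_t+\tau$. Zero-respecting: $\mathrm{supp}(x^k)\subseteq\bigcup_{j=1}^k\mathrm{supp}(g^j)$ for all $k\in\mathbb{N}_0$ and all realizations, where $\mathrm{supp}(x)=\{i:x_i\ne0\}$. *)

(* Defs.v *)
From HB Require Import structures.
From mathcomp Require Import all_boot all_order all_algebra.
From mathcomp Require Import all_classical all_reals.
From mathcomp Require Import topology normedtype derive exp.
Set Implicit Arguments. Unset Strict Implicit. Unset Printing Implicit Defensive.
Import Order.TTheory GRing.Theory Num.Theory numFieldNormedType.Exports.
Local Open Scope ring_scope.

Section Protocol.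
Variable R : realType.

(* Points of R^d are row vectors; coordinate j (1-based in the paper) is the
   ordinal j-1, i.e. x 0 j with j : 'I_d stands for x_{j+1}. *)
Local Notation vec d := 'rV[R]_d (only parsing).

(* prog(x) = max{ i >= 0 : x_i <> 0 }, with x_0 = 1 (so the max over an empty
   set of nonzero coordinates is 0). *)
Definition prog (d : nat) (x : vec d) : nat :=
  \max_(j < d | x 0 j != 0) j.+1.

Definition gradj (d : nat) (f : vec d -> R) (x : vec d) (j : 'I_d) : R :=
  ('D_(delta_mx 0 j : vec d) f) x.

Definition grad (d : nat) (f : vec d -> R) (x : vec d) : vec d :=
  \row_j gradj f x j.

Definition Gmap (d : nat) (f : vec d -> R) (p : R) (x : vec d) (xi : bool) : vec d :=
  \row_j (gradj f x j *
          (1 + (if (prog x < j.+1)%N then (xi%:R / p - 1) else 0))).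

Definition ostate (d : nat) : Type := (R * vec d * bool)%type.

Definition delayed_oracle (d : nat) (G : vec d -> bool -> vec d) (tau : R)
  (t : R) (x : vec d) (s : ostate d) (xi : bool) : ostate d * vec d :=
  let: (st, sx, sq) := s in
  if ~~ sq then ((t, x, true), 0)
  else if t < st + tau then ((st, sx, true), 0)
  else ((0, 0, false), G sx xi).

(* An algorithm: A^k maps the first k oracle answers (a sequence of length k)
   to (time, oracle index, query point). *)
Definition algorithm (n d : nat) : Type := seq (vec d) -> R * 'I_n * vec d.

Definition alg_valid (n d : nat) (A : algorithm n d) : Prop :=
  (forall gs, 0 <= (A gs).1.1) /\
  (forall gs g, (A gs).1.1 <= (A (rcons gs g)).1.1).

Section Run.
Variables (n d : nat) (A : algorithm n d) (O : 'I_n -> R -> vec d -> ostate d -> bool -> ostate d * vec d).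

(* xi k is the sample xi^{k+1}.  hist xi k = (oracle states s^k, [g^1;..;g^k]). *)
Fixpoint hist (xi : nat -> bool) (k : nat) : ('I_n -> ostate d) * seq (vec d) :=
  match k with
  | 0 => (fun _ => (0, 0, false), [::])
  | k'.+1 =>
    let: (s, gs) := hist xi k' in
    let: (t, i, x) := A gs in
    let: (si, g) := O i t x (s i) (xi k') in
    ((fun j => if j == i then si else s j), rcons gs g)
  end.

Definition query (xi : nat -> bool) (k : nat) : vec d := (A (hist xi k).2).2.

Definition qtime (xi : nat -> bool) (k : nat) : R :=
  match k with 0 => 0 | k'.+1 => (A (hist xi k').2).1.1 end.

Definition in_S (xi : nat -> bool) (t : R) (k : nat) : Prop := qtime xi k <= t.

Definition zero_resp_run (xi : nat -> bool) : Prop :=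
  forall k (j : 'I_d), query xi k 0 j != 0 ->
    exists2 g, g \in (hist xi k).2 & g 0 j != 0.
End Run.

Definition ext (K : nat) (b : {ffun 'I_K -> bool}) : nat -> bool :=
  fun k => match insub k with Some i => b i | None => false end.

(* Probability, under i.i.d. Bernoulli(p) samples, of an event depending on
   the first K samples only. *)
Definition probK (p : R) (K : nat) (E : (nat -> bool) -> Prop) : R :=
  \sum_(b : {ffun 'I_K -> bool})
     (\prod_(i < K) (if b i then p else 1 - p)) * (asbool (E (ext b)))%:R.

End Protocol.

(* Main.v *)
Require Import Defs.
From HB Require Import structures.
From mathcomp Require Import all_boot all_order all_algebra.
From mathcomp Require Import all_classical all_reals.
From mathcomp Require Import topology normedtype derive exp.
From mathcomp Require Import ring lra sequences.
Import Order.TTheory GRing.Theory Num.Theory numFieldNormedType.Exports.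
Local Open Scope ring_scope.
Set Implicit Arguments. Unset Strict Implicit. Unset Printing Implicit Defensive.

Section Proof.
Variable R : realType.
Variables (n T T' : nat) (hn : (0 < n)%N) (f : 'rV[R]_T' -> R) (tau : 'I_n -> R)
  (p : R) (A : algorithm R n T').
Hypothesis Hgrad : forall x, (prog (grad f x) <= (prog x).+1)%N.
Hypothesis Htau : forall i, 0 < tau i.
Hypothesis Hmono : forall i j : 'I_n, (i <= j)%N -> tau i <= tau j.
Hypothesis Hp0 : 0 < p.
Hypothesis Hp1 : p <= 1.
Hypothesis HA : alg_valid A.

Definition Oc := fun i : 'I_n => delayed_oracle (Gmap f p) (tau i).

Lemma prog0 d : prog (0 : 'rV[R]_d) = 0%N.
Proof. by rewrite /prog big_pred0 // => j; rewrite mxE eqxx. Qed.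

Lemma prog_le d (x : 'rV[R]_d) m :
  (forall j : 'I_d, x 0 j != 0 -> (j < m)%N) -> (prog x <= m)%N.
Proof. by move=> H; apply/bigmax_leqP => j /H. Qed.

Lemma prog_ge d (x : 'rV[R]_d) (j : 'I_d) : x 0 j != 0 -> (j < prog x)%N.
Proof. by move=> H; rewrite /prog; exact: (@leq_bigmax_cond _ (fun j => x 0 j != 0) (fun j : 'I_d => j.+1) j H). Qed.

Lemma prog_G sx (b : bool) : (prog (Gmap f p sx b) <= prog sx + b)%N.
Proof.
apply: prog_le => j; rewrite mxE mulf_eq0 negb_or => /andP[h1 h2].
have : (j < (prog sx).+1)%N.
  apply: (leq_trans _ (Hgrad sx)); apply: prog_ge; by rewrite mxE.
rewrite ltnS leq_eqVlt => /orP[/eqP Ej|Hj]; last by apply: (leq_trans Hj); rewrite leq_addr.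
move: h2; rewrite -Ej ltnSn; case: b => //=.
  by rewrite addn1.
by rewrite mul0r sub0r subrr eqxx.
Qed.

Definition stepS (s : 'I_n -> ostate R T') (gs : seq 'rV[R]_T') (b : bool) :=
  let a := A gs in let o := Oc a.1.2 a.1.1 a.2 (s a.1.2) b in
  ((fun j => if j == a.1.2 then o.1 else s j), rcons gs o.2).

Lemma histS xi k : hist A Oc xi k.+1 = stepS (hist A Oc xi k).1 (hist A Oc xi k).2 (xi k).
Proof.
rewrite /= /stepS; case: (hist A Oc xi k) => s gs /=.
case: (A gs) => [[t i] x] /=.
by case: (Oc i t x (s i) (xi k)).
Qed.

Lemma hist_agree xi xi' k : (forall j, (j < k)%N -> xi j = xi' j) ->
  hist A Oc xi k = hist A Oc xi' k.
Proof.
elim: k => [//|k IH] H; rewrite !histS IH ?H // => j Hj; apply: H; exact: ltnW.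
Qed.


Definition Pk (gs : seq 'rV[R]_T') := \max_(g <- gs) prog g.
Lemma Pk_rcons gs g : Pk (rcons gs g) = maxn (Pk gs) (prog g).
Proof. by rewrite /Pk -cats1 big_cat big_seq1. Qed.

Definition Lv xi k := minn (Pk (hist A Oc xi k).2) T.
Fixpoint rg xi k : R := match k with 0 => 0
  | k'.+1 => if (Lv xi k' < Lv xi k'.+1)%N then qtime A Oc xi k'.+1 else rg xi k' end.

Definition Fm (m : 'I_n) :=
  (\sum_(i < n | (i <= m)%N) (tau i)^-1)^-1 * (p^-1 + m%:R + 1).
Definition M := \big[Num.min/ Fm (Ordinal hn)]_(m < n) Fm m.
Definition cM := M / 24.
Definition u := expR (1:R) - 1.
Definition rho := 1 + u / 23.

Lemma S_gt0 (m : 'I_n) : 0 < \sum_(i < n | (i <= m)%N) (tau i)^-1.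
Proof.
rewrite (bigD1 m) //=; apply: (@lt_le_trans _ _ (tau m)^-1); first by rewrite invr_gt0.
rewrite lerDl sumr_ge0 // => i _; by rewrite invr_ge0 ltW.
Qed.

Lemma Fm_gt0 m : 0 < Fm m.
Proof.
rewrite /Fm mulr_gt0 ?invr_gt0 ?S_gt0 //.
have h1 : 0 < p^-1 by rewrite invr_gt0.
have h2 : (0:R) <= m%:R by rewrite ler0n.
lra.
Qed.

Lemma M_gt0 : 0 < M.
Proof. rewrite /M; apply: lt_bigmin => //; [exact: Fm_gt0 | move=> i _; exact: Fm_gt0]. Qed.

Lemma M_le m : M <= Fm m.
Proof. exact: bigmin_le. Qed.

Lemma cM_gt0 : 0 < cM.
Proof. rewrite /cM; have := M_gt0; lra. Qed.

Lemma u_ge0 : 0 <= u.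
Proof. rewrite /u; have := expR_ge1Dx (1:R); lra. Qed.

Lemma u_le3 : u <= 3.
Proof.
rewrite /u.
have E : expR (1:R) = expR (1/2) * expR (1/2) by rewrite -expRD; congr expR; lra.
set y := expR (1/2 : R).
have y0 : 0 < y by rewrite expR_gt0.
have h : 1/2 <= y^-1.
  rewrite /y -expRN; have := expR_ge1Dx (- (1/2) : R); lra.
have h2 : y * (1/2) <= y * y^-1 by rewrite ler_wpM2l // ltW.
rewrite mulfV ?gt_eqF // in h2.
have : y * y <= 2 * 2 by apply: ler_pM; lra.
rewrite E -/y; lra.
Qed.

Lemma rho_ge1 : 1 <= rho.
Proof. rewrite /rho; have := u_ge0; lra. Qed.

Lemma rho_gt0 : 0 < rho.
Proof. have := rho_ge1; lra. Qed.

Definition ef (s : 'I_n -> ostate R T') (L : nat) (cur : R) (j : 'I_n) : R :=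
  if (s j).2 && (prog (s j).1.2 == L) then (s j).1.1 else cur.
Definition bfun (r e : R) (j : 'I_n) : R :=
  if e + tau j <= r + cM then (r + cM - e) / tau j else 0.
Definition bs s L r cur := \sum_j bfun r (ef s L cur j) j.
Definition Bf s L r cur := if (L < T)%N then p * bs s L r cur else 0.
Definition Zf s L r cur :=
  expR (L%:R - r / cM) * (1 + u * Bf s L r cur) / rho ^+ L.+1.

Lemma bfun_ge0 r e j : 0 <= bfun r e j.
Proof.
rewrite /bfun; case: ifP => // h; apply: divr_ge0; last exact: ltW.
have := Htau j; lra.
Qed.

Lemma bfun_anti r e e' j : e <= e' -> bfun r e' j <= bfun r e j.
Proof.
move=> he; rewrite {1}/bfun; case: ifP => h'; last exact: bfun_ge0.
rewrite /bfun; case: ifP => h.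
  apply: ler_wpM2r; [by rewrite invr_ge0 ltW | lra].
move: h => /negbT; rewrite -ltNge => h; lra.
Qed.

Lemma bfun_early r st t' j : st + tau j <= t' -> t' <= r + cM ->
  bfun r t' j <= bfun r st j - 1.
Proof.
move=> h1 h2; have tj := Htau j.
have -> : bfun r st j = (r + cM - st) / tau j by rewrite /bfun ifT //; lra.
have E : (r + cM - st) / tau j - 1 = (r + cM - st - tau j) / tau j.
  by field; rewrite gt_eqF.
rewrite /bfun; case: ifP => h.
  rewrite E; apply: ler_wpM2r; [by rewrite invr_ge0 ltW | lra].
rewrite subr_ge0 ler_pdivlMr // mul1r; lra.
Qed.

Lemma bfun_late r t' j : r + cM < t' -> bfun r t' j = 0.
Proof. move=> h; rewrite /bfun ifF //; apply/negbTE; rewrite -ltNge; have := Htau j; lra. Qed.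

Lemma bfun_reset r j : bfun r r j = if tau j <= cM then cM / tau j else 0.
Proof. by rewrite /bfun lerD2l addrAC subrr add0r. Qed.

Lemma B0 r : p * \sum_j bfun r r j <= 23^-1.
Proof.
under eq_bigr do rewrite bfun_reset.
case: (pickP (fun j : 'I_n => tau j <= cM)) => [j0 Hj0|Hnone]; last first.
  rewrite big1 ?mulr0 ?invr_ge0 ?ler0n // => j _; by rewrite Hnone.
case: (@arg_maxnP _ j0 (fun j : 'I_n => tau j <= cM) (fun j : 'I_n => nat_of_ord j) Hj0) => m Hm Hmax.
have Heq : forall j : 'I_n, (tau j <= cM) = (j <= m)%N.
  move=> j; apply/idP/idP => [h | h]; [exact: Hmax | exact: le_trans (Hmono h) Hm].
rewrite -big_mkcond /= (eq_bigl (fun j : 'I_n => (j <= m)%N)) //.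
set S := \sum_(j < n | (j <= m)%N) (tau j)^-1.
have HS : 0 < S by apply: S_gt0.
have Hc : \sum_(j < n | (j <= m)%N) (1:R) = m.+1%:R.
  rewrite (eq_bigl (fun j : 'I_n => xpredT j && (j < m.+1)%N)) //.
  rewrite -(@big_ord_widen_cond R 0 +%R m.+1 n xpredT (fun _ => (1:R)) (ltn_ord m)).
  by rewrite sumr_const card_ord.
have Hcnt : m.+1%:R <= cM * S.
  rewrite -Hc /S mulr_sumr; apply: ler_sum => j hj.
  rewrite -Heq in hj; rewrite ler_pdivlMr ?mul1r //.
have HM : M * S <= p^-1 + m%:R + 1.
  have := ler_wpM2r (ltW HS) (M_le m); rewrite /Fm mulrAC mulVf ?mul1r ?(gt_eqF HS) //.
have e1 : cM * S * 24 = M * S by rewrite /cM; field.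
have e2 : p * p^-1 = 1 by rewrite mulfV // gt_eqF.
have h3 : p * (m.+1%:R) <= p * (cM * S) by rewrite ler_wpM2l // ltW.
have h4 : p * (M * S) <= p * (p^-1 + m%:R + 1) by rewrite ler_wpM2l // ltW.
rewrite -natr1 mulrDr mulr1 in h3.
have h4' : p * (M * S) <= 1 + p * m%:R + p by move: h4; rewrite !mulrDr e2 mulr1.
have h5 : p * (M * S) = p * (cM * S) * 24 by rewrite -e1; ring.
rewrite -mulr_sumr -/S; lra.
Qed.


Lemma ef_same s s' L cur cur' j : s' j = s j -> cur <= cur' ->
  ef s L cur j <= ef s' L cur' j.
Proof. by rewrite /ef => -> hc; case: ifP. Qed.

Lemma bs_le s s' L r cur cur' (i : 'I_n) d :
  (forall j, j != i -> s' j = s j) -> cur <= cur' ->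
  bfun r (ef s' L cur' i) i <= bfun r (ef s L cur i) i - d ->
  bs s' L r cur' <= bs s L r cur - d.
Proof.
move=> Hs hc hi; rewrite /bs (bigD1 i) //= [X in _ <= X - _](bigD1 i) //=.
have : \sum_(j | j != i) bfun r (ef s' L cur' j) j <=
       \sum_(j | j != i) bfun r (ef s L cur j) j.
  apply: ler_sum => j hj; apply: bfun_anti; apply: ef_same => //; exact: Hs.
lra.
Qed.

Lemma bs_ge s L r cur i : bfun r (ef s L cur i) i <= bs s L r cur.
Proof.
rewrite /bs (bigD1 i) //= lerDl sumr_ge0 // => j _; exact: bfun_ge0.
Qed.

Lemma Zf_reset (s' : 'I_n -> ostate R T') (L : nat) (t' : R) : (forall j, (s' j).2 -> (prog (s' j).1.2 <= L)%N) ->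
  Zf s' L.+1 t' t' <= expR (L.+1%:R - t' / cM) / rho ^+ L.+1.
Proof.
move=> H.
have Hef : forall j, ef s' L.+1 t' j = t'.
  move=> j; rewrite /ef; case E: ((s' j).2) => //=.
  have hj := H j E.
  by rewrite ifF //; apply/negbTE; rewrite neq_ltn ltnS hj.
have hu := u_ge0.
have HB : 1 + u * Bf s' L.+1 t' t' <= rho.
  rewrite /rho /Bf; case: ifP => _; last by rewrite mulr0; lra.
  have hb : p * bs s' L.+1 t' t' <= 23^-1.
    by rewrite /bs; under eq_bigr do rewrite Hef; exact: B0.
  have := ler_wpM2l hu hb; lra.
have r0 := rho_gt0.
have E : Zf s' L.+1 t' t' =
   (expR (L.+1%:R - t' / cM) / rho ^+ L.+1) * ((1 + u * Bf s' L.+1 t' t') / rho).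
  rewrite /Zf exprSr; field; rewrite ?gt_eqF ?exprn_gt0 //.
rewrite E; apply: ler_piMr.
  by rewrite divr_ge0 ?expR_ge0 // exprn_ge0 // ltW.
by rewrite ler_pdivrMr // mul1r.
Qed.

Lemma comb (a b c : R) : a <= c -> b <= c -> p * a + (1 - p) * b <= c.
Proof.
move=> ha hb; have h1 := ler_wpM2l (ltW Hp0) ha.
have hp : 0 <= 1 - p by rewrite subr_ge0.
have h2 := ler_wpM2l hp hb.
lra.
Qed.

Definition Znext s P r t' i x b :=
  let o := Oc i t' x (s i) b in
  Zf (fun j => if j == i then o.1 else s j) (minn (maxn P (prog o.2)) T)
     (if (minn P T < minn (maxn P (prog o.2)) T)%N then t' else r) t'.

Lemma core_gen (s : 'I_n -> ostate R T') (P : nat) (r cur t' : R) (i : 'I_n)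
  (x : 'rV[R]_T') :
  (forall j, (s j).2 -> (prog (s j).1.2 <= P)%N) ->
  r <= cur -> cur <= t' -> (prog x <= P)%N ->
  p * Znext s P r t' i x true + (1 - p) * Znext s P r t' i x false
    <= Zf s (minn P T) r cur.
Proof.
move=> Hpend Hr Hc Hx.
have hp0 := Hp0. have hp1' := Hp1.
have hp1 : 0 <= 1 - p by lra.
have hu := u_ge0.
have cM0 := cM_gt0.
case: (leqP T P) => HTP.
  suff E : forall b, Znext s P r t' i x b = Zf s (minn P T) r cur.
    by rewrite !E mulrBl mul1r addrC subrK ?(minn_idPr HTP).
  move=> b; rewrite /Znext (minn_idPr HTP).
  rewrite (minn_idPr (leq_trans HTP (leq_maxl _ _))) ltnn.
  by rewrite /Zf /Bf ltnn.
set base := expR (P%:R - r / cM) / rho ^+ P.+1.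
have base0 : 0 <= base.
  by rewrite divr_ge0 ?expR_ge0 // exprn_ge0 // ltW // rho_gt0.
set B := p * bs s P r cur.
have B0' : 0 <= B.
  apply: mulr_ge0; first exact: ltW. apply: sumr_ge0 => j _; exact: bfun_ge0.
have HZ : Zf s P r cur = base * (1 + u * B).
  by rewrite /Zf /Bf HTP /base mulrAC.
rewrite HZ.
have NC : forall (s' : 'I_n -> ostate R T') (g : 'rV[R]_T') (d : R),
    (forall j, j != i -> s' j = s j) -> (prog g <= P)%N ->
    bfun r (ef s' P t' i) i <= bfun r (ef s P cur i) i - d ->
    Zf s' (minn (maxn P (prog g)) T)
      (if (minn P T < minn (maxn P (prog g)) T)%N then t' else r) t'
      <= base * (1 + u * (B - p * d)).
  move=> s' g d Hs' Hg Hd.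
  rewrite (maxn_idPl Hg) (minn_idPl (ltnW HTP)) ltnn /Zf /Bf HTP.
  rewrite mulrAC -/base.
  apply: ler_wpM2l => //.
  have h := bs_le Hs' Hc Hd.
  have : u * (p * bs s' P r t') <= u * (p * (bs s P r cur - d)).
    by rewrite ler_wpM2l // ler_wpM2l // ltW.
  rewrite /B; lra.
have NC0 : forall (s' : 'I_n -> ostate R T') (g : 'rV[R]_T'),
    (forall j, j != i -> s' j = s j) -> (prog g <= P)%N ->
    bfun r (ef s' P t' i) i <= bfun r (ef s P cur i) i ->
    Zf s' (minn (maxn P (prog g)) T)
      (if (minn P T < minn (maxn P (prog g)) T)%N then t' else r) t'
      <= base * (1 + u * B).
  move=> s' g Hs' Hg Hd; have := NC s' g 0 Hs' Hg; rewrite !subr0 mulr0 subr0.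
  by apply.
have LC : forall (s' : 'I_n -> ostate R T') (g : 'rV[R]_T'),
    (forall j, (s' j).2 -> (prog (s' j).1.2 <= P)%N) -> prog g = P.+1 ->
    Zf s' (minn (maxn P (prog g)) T)
      (if (minn P T < minn (maxn P (prog g)) T)%N then t' else r) t'
      <= expR (P.+1%:R - t' / cM) / rho ^+ P.+1.
  move=> s' g Hs' Hg.
  rewrite Hg (maxn_idPr (leqnSn P)) (minn_idPl HTP) (minn_idPl (ltnW HTP)) ltnSn.
  exact: Zf_reset.
have Hi := Hpend i.
case Esi: (s i) Hi => [[st sx] sq] Hi.
case: sq Esi Hi => Esi Hi; last first.
  (* start call *)
  suff H : forall b, Znext s P r t' i x b <= base * (1 + u * B) by apply: comb.
  move=> b; rewrite /Znext /Oc /delayed_oracle Esi /=.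
  apply: NC0.
  - by move=> j /negbTE ->.
  - by rewrite prog0.
  - apply: bfun_anti; rewrite /ef eqxx Esi /=; by case: ifP.
have Hsx : (prog sx <= P)%N by exact: Hi.
case: (boolP (t' < st + tau i)) => Ht.
  (* waiting call *)
  suff H : forall b, Znext s P r t' i x b <= base * (1 + u * B) by apply: comb.
  move=> b; rewrite /Znext /Oc /delayed_oracle Esi /= Ht.
  apply: NC0.
  - by move=> j /negbTE ->.
  - by rewrite prog0.
  - apply: bfun_anti; rewrite /ef eqxx Esi /=; case: ifP => // _; exact: lexx.
(* completion *)
have Hst : st + tau i <= t' by rewrite leNgt.
have EZ : forall b, Znext s P r t' i x b =
   Zf (fun j => if j == i then (0, 0, false) else s j)
      (minn (maxn P (prog (Gmap f p sx b))) T)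
      (if (minn P T < minn (maxn P (prog (Gmap f p sx b))) T)%N then t' else r) t'.
  by move=> b; rewrite /Znext /Oc /delayed_oracle Esi /= (negbTE Ht).
set s' := (fun j => if j == i then (0:R, 0:'rV[R]_T', false) else s j) in EZ.
have Hs'e : forall j, j != i -> s' j = s j by move=> j /negbTE; rewrite /s' => ->.
have Hs'p : forall j, (s' j).2 -> (prog (s' j).1.2 <= P)%N.
  by move=> j; rewrite /s'; case: eqP => // _; exact: Hpend.
have ef' : ef s' P t' i = t' by rewrite /ef /s' eqxx.
case: (eqVneq (prog sx) P) => Hsxe; last first.
  suff H : forall b, Znext s P r t' i x b <= base * (1 + u * B) by apply: comb.
  move=> b; rewrite EZ; apply: NC0 => //.
  - apply: (leq_trans (prog_G sx b)); move: Hsx Hsxe; case: b => /=.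
      by rewrite addn1 => h1 h2; rewrite ltn_neqAle h2 h1.
    by rewrite addn0.
  - by apply: bfun_anti; rewrite ef' /ef Esi /= (negbTE Hsxe).
have efs : ef s P cur i = st by rewrite /ef Esi /= Hsxe eqxx.
have [Hl|Hl] := leP t' (r + cM).
  have be := bfun_early Hst Hl.
  have Bp : p <= B.
    have h1 := bs_ge s P r cur i; rewrite efs in h1.
    have h2 := bfun_ge0 r t' i.
    rewrite /B -{1}(mulr1 p); apply: ler_wpM2l; [exact: ltW | lra].
  have Zfa : Znext s P r t' i x false <= base * (1 + u * (B - p)).
    rewrite EZ -[X in B - X]mulr1; apply: NC => //.
    - by move: (prog_G sx false); rewrite addn0 Hsxe.
    - by rewrite ef' efs.
  have Eu : expR (1:R) = 1 + u by rewrite /u; ring.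
  have Ztr : Znext s P r t' i x true <= base * (1 + u + u * (B - p)).
    have hg := prog_G sx true; rewrite Hsxe addn1 in hg.
    have hBp : 0 <= u * (B - p) by apply: mulr_ge0 => //; lra.
    rewrite EZ; case: (boolP (prog (Gmap f p sx true) <= P)%N) => hgP; last rewrite -ltnNge in hgP.
      have hb1 : bfun r (ef s' P t' i) i <= bfun r (ef s P cur i) i - 1.
        by rewrite ef' efs.
      apply: (le_trans (NC _ _ 1 Hs'e hgP hb1)).
      rewrite mulr1; apply: ler_wpM2l => //; lra.
    have hgE : prog (Gmap f p sx true) = P.+1 by apply/eqP; rewrite eqn_leq hg hgP.
    apply: (le_trans (LC _ _ Hs'p hgE)).
    have h1 : expR (P.+1%:R - t' / cM) <= expR (P%:R - r / cM) * expR 1.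
      rewrite -expRD ler_expR -natr1.
      have : r / cM <= t' / cM by apply: ler_wpM2r; [rewrite invr_ge0 ltW | lra].
      lra.
    have h2 : expR (P.+1%:R - t' / cM) / rho ^+ P.+1 <= base * expR 1.
      rewrite /base mulrAC; apply: ler_wpM2r => //.
      by rewrite invr_ge0 exprn_ge0 // ltW // rho_gt0.
    apply: (le_trans h2); rewrite Eu; apply: ler_wpM2l => //; lra.
  have h1 := ler_wpM2l (ltW Hp0) Ztr.
  have h2 := ler_wpM2l hp1 Zfa.
  have E1 : p * (base * (1 + u + u * (B - p))) + (1 - p) * (base * (1 + u * (B - p)))
     = base * (1 + u * B) by ring.
  rewrite -E1; exact: lerD h1 h2.
suff H : forall b, Znext s P r t' i x b <= base * (1 + u * B) by apply: comb.
move=> b; rewrite EZ.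
have hg := prog_G sx b; rewrite Hsxe in hg.
case: (boolP (prog (Gmap f p sx b) <= P)%N) => hgP; last rewrite -ltnNge in hgP.
  apply: NC0 => //; rewrite ef' efs bfun_late //; exact: bfun_ge0.
have hgE : prog (Gmap f p sx b) = P.+1.
  apply/eqP; rewrite eqn_leq hgP andbT; apply: (leq_trans hg).
  by case: b {hg hgP} => /=; rewrite ?addn1 ?addn0 ?leqnSn.
apply: (le_trans (LC _ _ Hs'p hgE)).
have h1 : expR (P.+1%:R - t' / cM) <= expR (P%:R - r / cM).
  rewrite ler_expR -natr1.
  have : 1 <= (t' - r) / cM by rewrite ler_pdivlMr // mul1r; lra.
  rewrite mulrBl; lra.
have h2 : expR (P.+1%:R - t' / cM) / rho ^+ P.+1 <= base.
  rewrite /base; apply: ler_wpM2r => //.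
  by rewrite invr_ge0 exprn_ge0 // ltW // rho_gt0.
apply: (le_trans h2); rewrite -{1}(mulr1 base); apply: ler_wpM2l => //.
have : 0 <= u * B by exact: mulr_ge0.
lra.
Qed.


Hypothesis HZ : forall xi : nat -> bool, (forall k, xi k = false -> p < 1) ->
  zero_resp_run A Oc xi.

Definition ZRk xi k := (prog (query A Oc xi k) <= Pk (hist A Oc xi k).2)%N.
Definition pend_ok xi k := forall j, ((hist A Oc xi k).1 j).2 ->
  (prog ((hist A Oc xi k).1 j).1.2 <= Pk (hist A Oc xi k).2)%N.
Definition Zr xi k := Zf (hist A Oc xi k).1 (Lv xi k) (rg xi k) (qtime A Oc xi k).
Definition upd (xi : nat -> bool) k (c : bool) := fun j => if j == k then c else xi j.

Lemma qtime_mono xi k : qtime A Oc xi k <= (A (hist A Oc xi k).2).1.1.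
Proof.
case: k => [|k]; first by case: HA.
rewrite /qtime (histS xi k) /stepS /=; case: HA => _; exact.
Qed.

Lemma Pk_S xi k : (Pk (hist A Oc xi k).2 <= Pk (hist A Oc xi k.+1).2)%N.
Proof. by rewrite histS /stepS /= Pk_rcons leq_maxl. Qed.

Lemma zr_prog xi k : zero_resp_run A Oc xi -> ZRk xi k.
Proof.
move=> H; apply: prog_le => j hj.
have [g hg hgj] := H k j hj.
apply: (leq_trans (prog_ge hgj)).
exact: (@leq_bigmax_seq _ _ xpredT (fun g => prog g) g hg).
Qed.

Lemma inv_all xi k : (forall j, (j < k)%N -> ZRk xi j) ->
  pend_ok xi k /\ rg xi k <= qtime A Oc xi k.
Proof.
elim: k => [|k IH] H.
  by split => // j.
have [IH1 IH2] := IH (fun j hj => H j (ltnW hj)).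
have Hk := H k (ltnSn k).
split.
  move=> j; rewrite histS /stepS /=.
  have HP : forall g, (Pk (hist A Oc xi k).2 <= Pk (rcons (hist A Oc xi k).2 g))%N.
    by move=> g; rewrite Pk_rcons leq_maxl.
  case: eqP => [Ej|_]; last by move=> hj; exact: (leq_trans (IH1 j hj) (HP _)).
  rewrite /Oc /delayed_oracle.
  have IHi := IH1 (A (hist A Oc xi k).2).1.2.
  case: ((hist A Oc xi k).1 (A (hist A Oc xi k).2).1.2) IHi => [[st sx] sq] IHi.
  case: sq IHi => IHi /=.
    case: ifP => _ //= _; exact: (leq_trans (IHi erefl) (HP _)).
  move=> _; apply: (leq_trans _ (HP _)); exact: Hk.
rewrite /=; case: ifP => _; first exact: lexx.
exact: (le_trans IH2 (qtime_mono xi k)).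
Qed.

Lemma rg_agree xi xi' k : (forall j, (j < k)%N -> xi j = xi' j) -> rg xi k = rg xi' k.
Proof.
elim: k => [//|k IH] H /=.
have H' : forall j, (j < k)%N -> xi j = xi' j by move=> j hj; apply: H; exact: ltnW.
rewrite /Lv /qtime (hist_agree H) (hist_agree H') IH //.
Qed.

Lemma Zr_next xi k c : Zr (upd xi k c) k.+1 =
  Znext (hist A Oc xi k).1 (Pk (hist A Oc xi k).2) (rg xi k)
    (A (hist A Oc xi k).2).1.1 (A (hist A Oc xi k).2).1.2 (A (hist A Oc xi k).2).2 c.
Proof.
have ag : forall j, (j < k)%N -> upd xi k c j = xi j.
  by move=> j hj; rewrite /upd (ltn_eqF hj).
have Eh := hist_agree ag.
have Er := rg_agree ag.
have Ec : upd xi k c k = c by rewrite /upd eqxx.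
have rgS : rg (upd xi k c) k.+1 = if (Lv (upd xi k c) k < Lv (upd xi k c) k.+1)%N
  then qtime A Oc (upd xi k c) k.+1 else rg (upd xi k c) k by [].
have qS : qtime A Oc (upd xi k c) k.+1 = (A (hist A Oc (upd xi k c) k).2).1.1 by [].
rewrite /Zr rgS qS /Lv !histS Eh Er Ec /stepS /= Pk_rcons.
by rewrite /Znext.
Qed.

Lemma Zr_step xi k : (forall j, (j <= k)%N -> ZRk xi j) ->
  p * Zr (upd xi k true) k.+1 + (1 - p) * Zr (upd xi k false) k.+1 <= Zr xi k.
Proof.
move=> H; have [H1 H2] := inv_all (fun j hj => H j (ltnW hj)).
rewrite !Zr_next; apply: core_gen => //.
- exact: qtime_mono.
- exact: (H k (leqnn k)).
Qed.

Lemma Zf_ge0 s L r cur : 0 <= Zf s L r cur.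
Proof.
rewrite /Zf; apply: divr_ge0; last by rewrite exprn_ge0 // ltW // rho_gt0.
apply: mulr_ge0; first exact: expR_ge0.
have hu := u_ge0.
have : 0 <= Bf s L r cur.
  rewrite /Bf; case: ifP => _ //; apply: mulr_ge0; first exact: ltW.
  apply: sumr_ge0 => j _; exact: bfun_ge0.
move=> hb; have := mulr_ge0 hu hb; lra.
Qed.

Lemma freeze xi k d : Lv xi k = T -> Lv xi (k + d) = T /\ rg xi (k + d) = rg xi k.
Proof.
move=> HL; elim: d => [|d [IH1 IH2]]; first by rewrite addn0.
rewrite addnS.
have HL' : Lv xi (k + d).+1 = T.
  apply/minn_idPr; apply: (leq_trans _ (Pk_S xi (k + d))).
  by move: IH1; rewrite /Lv => /minn_idPr.
split => //=; by rewrite HL' IH1 ltnn.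
Qed.

Definition W K (b : {ffun 'I_K -> bool}) := \prod_(i < K) (if b i then p else 1 - p).
Definition Ex K (F : (nat -> bool) -> R) :=
  \sum_(b : {ffun 'I_K -> bool}) W b * F (ext b).

Lemma W_ge0 K (b : {ffun 'I_K -> bool}) : 0 <= W b.
Proof.
have hp0 := Hp0; have hp1 := Hp1.
apply: prodr_ge0 => i _; case: (b i); lra.
Qed.

Lemma sumW K : \sum_(b : {ffun 'I_K -> bool}) W b = 1.
Proof.
rewrite /W -(bigA_distr_bigA (fun (i : 'I_K) (c : bool) => if c then p else 1 - p)) /=.
by apply: big1 => i _; rewrite big_bool /= addrC subrK.
Qed.

Definition extf K (b : {ffun 'I_K -> bool}) (c : bool) : {ffun 'I_K.+1 -> bool} :=
  [ffun i => if unlift ord_max i is Some j then b j else c].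

Lemma sum_split K (G : {ffun 'I_K.+1 -> bool} -> R) :
  \sum_b G b = \sum_(b : {ffun 'I_K -> bool}) \sum_(c : bool) G (extf b c).
Proof.
rewrite pair_big /=.
rewrite (reindex (fun q : {ffun 'I_K -> bool} * bool => extf q.1 q.2)) //=.
apply: onW_bij.
exists (fun b : {ffun 'I_K.+1 -> bool} => ([ffun j => b (lift ord_max j)], b ord_max)).
  move=> [b c] /=; congr pair.
    by apply/ffunP => j; rewrite !ffunE liftK.
  by rewrite ffunE unlift_none.
move=> b; apply/ffunP => i; rewrite ffunE.
by case: unliftP => [j ->|->]; rewrite ?ffunE.
Qed.

Lemma W_extf K (b : {ffun 'I_K -> bool}) c :
  W (extf b c) = W b * (if c then p else 1 - p).
Proof.
rewrite /W big_ord_recr /=; congr (_ * _).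
  apply: eq_bigr => i _.
  have -> : widen_ord (leqnSn K) i = lift ord_max i.
    by apply: val_inj; rewrite /= /bump leqNgt ltn_ord.
  by rewrite ffunE liftK.
by rewrite ffunE unlift_none.
Qed.

Lemma ext_lt K (b : {ffun 'I_K -> bool}) j (hj : (j < K)%N) : ext b j = b (Ordinal hj).
Proof.
rewrite /ext; case: insubP => [i0 _ Ei0|]; last by rewrite hj.
by congr (b _); apply: val_inj.
Qed.

Lemma ext_ge K (b : {ffun 'I_K -> bool}) j : (K <= j)%N -> ext b j = false.
Proof.
move=> hj; rewrite /ext; case: insubP => [i0 hi _|//].
by move: hi; rewrite ltnNge hj.
Qed.

Lemma ext_extf K (b : {ffun 'I_K -> bool}) c : ext (extf b c) = upd (ext b) K c.
Proof.
apply: boolp.funext => j; rewrite /upd.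
case: (ltngtP j K) => hj.
- have hj' : (j < K.+1)%N by exact: ltnW.
  rewrite (ext_lt _ hj') (ext_lt _ hj) ffunE.
  have -> : Ordinal hj' = lift ord_max (Ordinal hj).
    by apply: val_inj; rewrite /= /bump leqNgt hj.
  by rewrite liftK.
- rewrite (ext_ge _ (ltnW hj)) (ext_ge _ hj).
  by [].
- rewrite hj (ext_lt _ (ltnSn K)) ffunE.
  have -> : Ordinal (ltnSn K) = ord_max by apply: val_inj.
  by rewrite unlift_none.
Qed.

Lemma Ex_S K F : Ex K.+1 F = \sum_(b : {ffun 'I_K -> bool})
   W b * (p * F (upd (ext b) K true) + (1 - p) * F (upd (ext b) K false)).
Proof.
rewrite /Ex sum_split; apply: eq_bigr => b _.
by rewrite big_bool /= !W_extf !ext_extf /=; ring.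
Qed.

Lemma ZR_ext K (b : {ffun 'I_K -> bool}) : W b != 0 ->
  forall j, (j <= K)%N -> ZRk (ext b) j.
Proof.
move=> HW j hj.
set xi' := fun m => if (m < K)%N then ext b m else true.
have Hxi' : zero_resp_run A Oc xi'.
  apply: HZ => m; rewrite /xi'; case: ifP => hm // Hb.
  rewrite lt_neqAle Hp1 andbT; apply/eqP => Ep1.
  move/eqP: HW; apply; rewrite /W; apply/eqP/prodf_eq0; exists (Ordinal hm) => //.
  by rewrite -(ext_lt b hm) Hb Ep1 subrr.
have := zr_prog j Hxi'.
have ag : forall m, (m < j)%N -> xi' m = ext b m.
  by move=> m hm; rewrite /xi' (leq_trans hm hj).
by rewrite /ZRk /query (hist_agree ag).
Qed.

Lemma Zr0 xi : Zr xi 0 <= 1.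
Proof.
rewrite /Zr /Lv /= /Pk big_nil min0n.
have hu := u_ge0.
have HB : 1 + u * Bf (fun=> (0, 0, false)) 0 0 0 <= rho.
  rewrite /rho /Bf; case: ifP => _; last by rewrite mulr0; lra.
  have hb : p * bs (fun=> (0, 0, false)) 0 0 0 <= 23^-1 by exact: B0.
  have := ler_wpM2l hu hb; lra.
rewrite /Zf mul0r subr0 expR0 mul1r expr1 ler_pdivrMr ?rho_gt0 // mul1r //.
Qed.

Lemma EZ_le K : Ex K (fun xi => Zr xi K) <= 1.
Proof.
elim: K => [|K IH].
  rewrite /Ex.
  apply: (@le_trans _ _ (\sum_(b : {ffun 'I_0 -> bool}) W b * 1)).
    by apply: ler_sum => b _; apply: ler_wpM2l; [exact: W_ge0 | exact: Zr0].
  by under eq_bigr do rewrite mulr1; rewrite sumW.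
rewrite Ex_S; apply: le_trans IH; apply: ler_sum => b _.
have [W0|W0] := eqVneq (W b) 0; first by rewrite W0 !mul0r.
apply: ler_wpM2l; first exact: W_ge0.
apply: Zr_step => j hj; exact: ZR_ext.
Qed.


Lemma powle (a b : R) k : 0 <= a -> a <= b -> a ^+ k <= b ^+ k.
Proof.
move=> ha hab; elim: k => [|k IH]; first by rewrite !expr0.
rewrite !exprS; apply: ler_pM => //; exact: exprn_ge0.
Qed.

Lemma final K t delta : (0 < T)%N -> 0 < delta -> 0 <= t ->
  t <= 24^-1 * M * (T%:R / 2 + ln delta) ->
  1 - delta <= probK p K (fun xi => forall k, (k <= K)%N -> in_S A Oc xi t k ->
                           (prog (query A Oc xi k) < T)%N).
Proof.
move=> HT hd0 ht0 ht.
set E := (fun xi => forall k, (k <= K)%N -> in_S A Oc xi t k -> (prog (query A Oc xi k) < T)%N).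
have cM0 := cM_gt0. have r0 := rho_gt0.
set th := expR (T%:R - t / cM) / rho ^+ T.+1.
have th0 : 0 < th by rewrite /th divr_gt0 ?expR_gt0 // exprn_gt0.
have Hb : forall b : {ffun 'I_K -> bool},
    W b * (1 - (asbool (E (ext b)))%:R) <= W b * (Zr (ext b) K / th).
  move=> b; have [W0|W0] := eqVneq (W b) 0; first by rewrite W0 !mul0r.
  apply: ler_wpM2l; first exact: W_ge0.
  case: (pselect (E (ext b))) => HE.
    rewrite asboolT // subrr; apply: divr_ge0; [exact: Zf_ge0 | exact: ltW].
  rewrite asboolF // subr0 ler_pdivlMr // mul1r.
  have [k [hk hs hT]] : exists k, [/\ (k <= K)%N, in_S A Oc (ext b) t k &
                           ~~ (prog (query A Oc (ext b) k) < T)%N].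
    case: (pselect (exists k, [/\ (k <= K)%N, in_S A Oc (ext b) t k &
                           ~~ (prog (query A Oc (ext b) k) < T)%N])) => [//|Hne].
    exfalso; apply: HE => k hk hs; apply/negPn/negP => hnT; apply: Hne; exists k; split => //.
  have Zk := ZR_ext W0 hk.
  have HPk : (T <= Pk (hist A Oc (ext b) k).2)%N.
    by rewrite -leqNgt in hT; exact: leq_trans hT Zk.
  have HL : Lv (ext b) k = T by apply/minn_idPr.
  have [_ Hrg] := inv_all (fun j hj => ZR_ext W0 (ltnW (leq_trans hj hk))).
  have [HL' Hr'] := freeze (K - k) HL.
  rewrite subnKC // in HL' Hr'.
  rewrite /Zr HL' Hr' /Zf /Bf ltnn mulr0 addr0 mulr1 /th.
  apply: ler_wpM2r; first by rewrite invr_ge0 exprn_ge0 // ltW.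
  rewrite ler_expR lerD2l lerN2; apply: ler_wpM2r; first by rewrite invr_ge0 ltW.
  exact: (le_trans Hrg hs).
have S1 : 1 - probK p K E =
    \sum_(b : {ffun 'I_K -> bool}) W b * (1 - (asbool (E (ext b)))%:R).
  rewrite /probK -{1}(sumW K) -sumrB; apply: eq_bigr => b _.
  by rewrite mulrBr mulr1.
have S2 : \sum_(b : {ffun 'I_K -> bool}) W b * (Zr (ext b) K / th)
    = Ex K (fun xi => Zr xi K) / th.
  by rewrite /Ex mulr_suml; apply: eq_bigr => b _; rewrite mulrA.
have H1 : 1 - probK p K E <= th^-1.
  rewrite S1; apply: (le_trans (ler_sum _ (fun b _ => Hb b))).
  rewrite S2 -[X in _ <= X]mul1r; apply: ler_wpM2r; first by rewrite invr_ge0 ltW.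
  exact: EZ_le.
suff H2 : th^-1 <= delta by have := le_trans H1 H2; lra.
have Ht : t / cM <= T%:R / 2 + ln delta.
  rewrite ler_pdivrMr //; move: ht; rewrite /cM.
  have -> : 24^-1 * M * (T%:R / 2 + ln delta) = (T%:R / 2 + ln delta) * (M / 24) by ring.
  done.
have hu := u_ge0. have hu3 := u_le3.
have hT1 : (1:R) <= T%:R by rewrite ler1n.
have Hrho : rho ^+ T.+1 <= expR (T%:R / 2).
  have h1 : rho <= expR (u / 23) by rewrite /rho; exact: expR_ge1Dx.
  apply: (le_trans (powle T.+1 (ltW r0) h1)).
  rewrite -expRM_natl ler_expR -natr1.
  have : (T%:R + 1) * u <= (T%:R + 1) * 3 by apply: ler_wpM2l => //; lra.
  lra.
have Hd : delta = expR (ln delta) by rewrite lnK // posrE.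
rewrite /th invf_div ler_pdivrMr ?expR_gt0 //.
apply: (le_trans Hrho).
rewrite {1}Hd -expRD ler_expR.
lra.
Qed.

End Proof.

Theorem mainTheorem13 (R : realType) (n T T' : nat) (hn : (0 < n)%N)
  (f : 'rV[R]_T' -> R) (tau : 'I_n -> R) (p : R) (A : algorithm R n T') :
  (0 < T)%N -> (T <= T')%N ->
  (forall x, differentiable f x) ->
  (forall x, (prog (grad f x) <= (prog x).+1)%N) ->
  (forall i, 0 < tau i) ->
  (forall i j : 'I_n, (i <= j)%N -> tau i <= tau j) ->
  0 < p -> p <= 1 ->
  alg_valid A ->
  let O := fun i : 'I_n => delayed_oracle (Gmap f p) (tau i) in
  (forall xi : nat -> bool, (forall k, xi k = false -> p < 1) ->
     zero_resp_run A O xi) ->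
  forall (delta t : R), 0 < delta -> delta <= 1 -> 0 <= t ->
  t <= 24^-1 *
       (\big[Num.min/ ((\sum_(i < n | (i <= Ordinal hn)%N) (tau i)^-1)^-1
                        * (p^-1 + (Ordinal hn)%:R + 1))]_(m < n)
          ((\sum_(i < n | (i <= m)%N) (tau i)^-1)^-1 * (p^-1 + m%:R + 1)))
       * (T%:R / 2 + ln delta) ->
  forall K : nat,
    1 - delta <=
    probK p K (fun xi => forall k, (k <= K)%N -> in_S A O xi t k ->
                           (prog (query A O xi k) < T)%N).
Proof.
move=> HT _ _ Hgrad Htau Hmono Hp0 Hp1 HA O HZ delta t hd0 _ ht0 ht K.
exact: (@final R n T T' hn f tau p A Hgrad Htau Hmono Hp0 Hp1 HA HZ K t delta HT hd0 ht0 ht).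
Qed.
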